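(* For $n,k\geq0$ let $s_{n,k}=\sum_{j=0}^{n-k}\binom{k+j}{k}\binom{j}{n-j-k}$ (equivalently $s_{n,k}=[x^n]\,x^k(1-x-x^2)^{-(k+1)}$). Then $s_{n,k}$ equals the number of free symmetric Schröder paths of length $2n$ whose left half (the part from $x=0$ to $x=n$) contains exactly $k$ up steps.
   Context: Steps: $U=(1,1)$ (up), $D=(1,-1)$ (down), $H=(2,0)$. A free symmetric Schröder path of length $2n$ is a lattice path from $(0,0)$ to $(2n,0)$ with steps $U,D,H$ (with no restriction on going below the $x$-axis) that has a vertex with $x$-coordinate $n$ and is invariant under reflection in the line $x=n$ (reversing the step sequence and interchanging $U$ and $D$, keeping $H$, gives the same sequence). Binomial coefficients $\binom{a}{b}$ with $b<0$ or $b>a$ are $0$. *)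

(* Defs.v *)
From HB Require Import structures.
From mathcomp Require Import all_boot.
Set Implicit Arguments. Unset Strict Implicit. Unset Printing Implicit Defensive.

(* Steps: U = (1,1), D = (1,-1), H = (2,0). *)
Inductive step := U | D | H.

Definition step_eqb (a b : step) : bool :=
  match a, b with U, U | D, D | H, H => true | _, _ => false end.
Lemma step_eqP : Equality.axiom step_eqb.
Proof. by case; case; constructor. Qed.
HB.instance Definition _ := hasDecEq.Build step step_eqP.

Definition swidth (x : step) : nat := if x is H then 2 else 1.
Definition width (s : seq step) : nat := sumn (map swidth s).

Definition sflip (x : step) : step :=
  match x with U => D | D => U | H => H end.
(* reflection of a path in the line x = n: reverse and swap U/D *)
Definition mirror (s : seq step) : seq step := rev (map sflip s).

(* free symmetric Schröder path of length 2n: from (0,0) to (2n,0),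
   with a vertex of abscissa n, invariant under the reflection *)
Definition free_sym_schroder (n : nat) (s : seq step) : bool :=
  [&& width s == 2 * n,
      count (pred1 U) s == count (pred1 D) s,
      has (fun i => width (take i s) == n) (iota 0 (size s).+1)
    & mirror s == s].

(* the left half (prefix ending at the vertex of abscissa n; it is unique
   since widths of prefixes are strictly increasing) has exactly k up steps *)
Definition left_half_ups (n k : nat) (s : seq step) : bool :=
  has (fun i => (width (take i s) == n) && (count (pred1 U) (take i s) == k))
      (iota 0 (size s).+1).

Fixpoint seqs_of_size (m : nat) : seq (seq step) :=
  if m is m'.+1 then
    flatten [seq [seq x :: t | t <- seqs_of_size m'] | x <- [:: U; D; H]]
  else [:: [::]].

(* all step sequences with at most m steps, each exactly once
   (a path of width 2n has at most 2n steps) *)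
Definition seqs_upto (m : nat) : seq (seq step) :=
  flatten [seq seqs_of_size i | i <- iota 0 m.+1].

Definition num_fssp (n k : nat) : nat :=
  count (fun s => free_sym_schroder n s && left_half_ups n k s) (seqs_upto (2 * n)).

Definition snk (n k : nat) : nat :=
  if k <= n then \sum_(0 <= j < (n - k).+1) 'C(k + j, k) * 'C(j, n - j - k)
  else 0.

(* Main.v *)
Require Import Defs.
From mathcomp Require Import all_boot.
From mathcomp Require Import zify.

Fixpoint lefts (n : nat) : seq (seq step) :=
  match n with
  | 0 => [:: [::]]
  | m.+1 => map (cons U) (lefts m) ++ map (cons D) (lefts m) ++
            map (cons H) (match m with 0 => [::] | p.+1 => lefts p end)
  end.

Lemma mem_cons_map (x y : step) t (S : seq (seq step)) :
  (x :: t \in map (cons y) S) = (x == y) && (t \in S).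
Proof.
apply/mapP/andP => [[t' Ht' [-> ->]]|[/eqP -> Ht]]; first by split.
by exists t.
Qed.

Lemma nil_notin_map (y : step) (S : seq (seq step)) : ([::] \in map (cons y) S) = false.
Proof. by apply/mapP => [[t _]]. Qed.

Lemma mem3 x t A B C :
  (x :: t \in map (cons U) A ++ map (cons D) B ++ map (cons H) C) =
  match x with U => t \in A | D => t \in B | H => t \in C end.
Proof. by rewrite !mem_cat !mem_cons_map; case: x => /=; rewrite ?orbF. Qed.

Lemma nil3 A B C :
  ([::] \in map (cons U) A ++ map (cons D) B ++ map (cons H) C) = false.
Proof. by rewrite !mem_cat !nil_notin_map. Qed.

Lemma uniq3 A B C : uniq A -> uniq B -> uniq C ->
  uniq (map (cons U) A ++ map (cons D) B ++ map (cons H) C).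
Proof.
have inj y : injective (@cons step y) by move=> a b [].
move=> uA uB uC.
rewrite cat_uniq cat_uniq !(map_inj_uniq (inj _)) uA uB uC /= andbT.
apply/andP; split.
  apply/hasPn => s; rewrite mem_cat => /orP [] /mapP [t _ ->]; by rewrite mem_cons_map.
apply/hasPn => s /mapP [t _ ->]; by rewrite !mem_cons_map.
Qed.

Lemma swidth_ge1 x : 0 < swidth x. Proof. by case: x. Qed.

Lemma size_le_width s : size s <= width s.
Proof.
elim: s => [|x s IH] //=; rewrite /width /= -/(width s).
have := swidth_ge1 x; lia.
Qed.

Lemma width_cons x s : width (x :: s) = swidth x + width s.
Proof. by []. Qed.

Lemma lefts_mem n s : (s \in lefts n) = (width s == n).
Proof.
elim: n {-2}n (leqnn n) s => [|N IH] n Hn s.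
  move: Hn; rewrite leqn0 => /eqP ->; case: s => [|x s] //=.
  rewrite inE width_cons (_ : (x :: s == [::]) = false) //; have := swidth_ge1 x; lia.
case: n Hn => [|m] Hm.
  case: s => [|x s] //=; rewrite inE width_cons (_ : (x :: s == [::]) = false) //; have := swidth_ge1 x; lia.
case: s => [|x s]; first by rewrite /= nil3.
rewrite /= mem3 width_cons.
case: x => /=; rewrite ?IH //; try lia.
case: m Hm => [|p] Hp /=.
  by rewrite in_nil; lia.
rewrite IH; lia.
Qed.

Lemma lefts_uniq n : uniq (lefts n).
Proof.
elim: n {-2}n (leqnn n) => [|N IH] n Hn.
  by move: Hn; rewrite leqn0 => /eqP ->.
case: n Hn => [|m] Hm //=.
apply: uniq3; try apply: IH; try lia.
case: m Hm => [|p] Hp //=; apply: IH; lia.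
Qed.

Lemma seqs_of_size_eq m : seqs_of_size m.+1 =
  map (cons U) (seqs_of_size m) ++ map (cons D) (seqs_of_size m) ++
  map (cons H) (seqs_of_size m).
Proof. by rewrite /= cats0. Qed.

Lemma seqs_of_size_mem m s : (s \in seqs_of_size m) = (size s == m).
Proof.
elim: m s => [|m IH] [|x s] //=; rewrite cats0 ?nil3 // mem3.
by case: x; rewrite IH.
Qed.

Lemma seqs_of_size_uniq m : uniq (seqs_of_size m).
Proof. by elim: m => [|m IH] //; rewrite seqs_of_size_eq uniq3. Qed.

Lemma seqs_upto_S m : seqs_upto m.+1 = seqs_upto m ++ seqs_of_size m.+1.
Proof.
by rewrite /seqs_upto -addn1 iotaD map_cat flatten_cat /= cats0.
Qed.

Lemma seqs_upto_mem m s : (s \in seqs_upto m) = (size s <= m).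
Proof.
elim: m => [|m IH].
  by rewrite /seqs_upto /=; case: s.
rewrite seqs_upto_S mem_cat IH seqs_of_size_mem; lia.
Qed.

Lemma seqs_upto_uniq m : uniq (seqs_upto m).
Proof.
elim: m => [|m IH]; first by rewrite /seqs_upto.
rewrite seqs_upto_S cat_uniq IH seqs_of_size_uniq andbT andTb.
apply/hasPn => s; rewrite seqs_of_size_mem seqs_upto_mem; lia.
Qed.

Lemma width_cat a b : width (a ++ b) = width a + width b.
Proof. by rewrite /width map_cat sumn_cat. Qed.

Lemma mirror_cat a b : mirror (a ++ b) = mirror b ++ mirror a.
Proof. by rewrite /mirror map_cat rev_cat. Qed.

Lemma sflipK : involutive sflip. Proof. by case. Qed.

Lemma mirrorK : involutive mirror.
Proof. by move=> s; rewrite /mirror map_rev revK (mapK sflipK). Qed.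

Lemma width_mirror a : width (mirror a) = width a.
Proof.
rewrite /width /mirror map_rev sumn_rev -map_comp.
by congr sumn; apply: eq_map; case.
Qed.

Lemma countU_mirror a : count (pred1 U) (mirror a) = count (pred1 D) a.
Proof. by rewrite /mirror count_rev count_map; apply: eq_count; case. Qed.

Lemma countD_mirror a : count (pred1 D) (mirror a) = count (pred1 U) a.
Proof. by rewrite /mirror count_rev count_map; apply: eq_count; case. Qed.

Lemma width0 a : width a = 0 -> a = [::].
Proof. case: a => // x a; rewrite width_cons; have := swidth_ge1 x; lia. Qed.

Lemma prefix_width L L' R R' : width L = width L' -> L ++ R = L' ++ R' -> L = L'.
Proof.
elim: L L' => [|x L IH] [|y L'] //=.
- by move=> /esym /width0.
- by move=> /width0.
- rewrite !width_cons => Hw [Hxy He]; subst y; congr cons; apply: IH => //; lia.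
Qed.

Definition double (L : seq step) := L ++ mirror L.

Lemma double_inj n : {in lefts n &, injective double}.
Proof.
move=> a b; rewrite !lefts_mem => /eqP Ha /eqP Hb; rewrite /double => E.
by apply: (@prefix_width a b (mirror a) (mirror b) _ E); rewrite Ha Hb.
Qed.

Lemma P_to n k s : free_sym_schroder n s && left_half_ups n k s ->
  exists2 L, (width L == n) && (count (pred1 U) L == k) & s = double L.
Proof.
case/andP => /and4P [/eqP Hws _ _ /eqP Hm] /hasP [i _ /andP [/eqP Hw /eqP Hc]].
exists (take i s); first by rewrite Hw Hc !eqxx.
have Hs := cat_take_drop i s.
have E : mirror (drop i s) ++ mirror (take i s) = take i s ++ drop i s.
  by rewrite -mirror_cat Hs Hm.
have Hwd : width (drop i s) = width (take i s).
  by move: Hws; rewrite -{1}Hs width_cat Hw; lia.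
have H1 := @prefix_width _ _ _ _ _ E; rewrite width_mirror Hwd in H1.
by rewrite /double -{2}(H1 erefl) mirrorK Hs.
Qed.

Lemma P_from n k L : width L = n -> count (pred1 U) L = k ->
  free_sym_schroder n (double L) && left_half_ups n k (double L).
Proof.
move=> Hw Hc.
have Hi : size L \in iota 0 (size (double L)).+1.
  rewrite mem_iota /double size_cat; lia.
have Ht : take (size L) (double L) = L by rewrite /double take_size_cat.
apply/andP; split; last first.
  by apply/hasP; exists (size L) => //; rewrite Ht Hw Hc !eqxx.
apply/and4P; split.
- by rewrite /double width_cat width_mirror Hw; apply/eqP; lia.
- by rewrite /double !count_cat countU_mirror countD_mirror addnC.
- by apply/hasP; exists (size L) => //; rewrite Ht Hw.
- by rewrite /double mirror_cat mirrorK.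
Qed.

Lemma main_count n k :
  num_fssp n k = count (fun L => count (pred1 U) L == k) (lefts n).
Proof.
rewrite /num_fssp -size_filter -size_filter.
rewrite -(size_map double [seq L <- lefts n | count (pred1 U) L == k]).
apply: perm_size; apply: uniq_perm.
- by apply: filter_uniq; apply: seqs_upto_uniq.
- rewrite map_inj_in_uniq; first by apply: filter_uniq; apply: lefts_uniq.
  move=> a b; rewrite !mem_filter => /andP [_ Ha] /andP [_ Hb]; exact: (@double_inj n a b Ha Hb).
move=> s; rewrite [LHS]mem_filter seqs_upto_mem; apply/andP/mapP.
- case => HP _; case: (@P_to n k s HP) => L /andP [Hw Hc] ->.
  by exists L => //; rewrite mem_filter Hc lefts_mem.
- case => L; rewrite mem_filter lefts_mem => /andP [/eqP Hc /eqP Hw] ->.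
  split; first exact: P_from.
  apply: leq_trans (size_le_width _) _.
  by rewrite /double width_cat width_mirror Hw; lia.
Qed.

Lemma cons_nonU0 x k S : x != U ->
  count (preim (cons x)
    (fun L : seq step => (count_mem U L == k) && (size L == k + 0))) S = 0.
Proof.
move=> hx; rewrite (eq_count (a2 := pred0)) ?count_pred0 // => L /=.
have := count_size (pred1 U) L => h; apply/negbTE/negP => /andP [/eqP E1 /eqP E2].
move: E1; rewrite (negbTE hx) add0n => E1.
rewrite addn0 -E1 in E2; move: h; rewrite -E2 ltnn //.
Qed.

Definition Fc n k j :=
  count (fun L => (count (pred1 U) L == k) && (size L == k + j)) (lefts n).

Lemma Fc0 k j : Fc 0 k j = ((k == 0) && (j == 0)).
Proof. by rewrite /Fc /=; case: k => [|k]; case: j. Qed.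

Lemma Fc_rec m k j : Fc m.+1 k j =
  (if k is k'.+1 then Fc m k' j else 0) +
  (if j is j'.+1 then Fc m k j' + (if m is p.+1 then Fc p k j' else 0) else 0).
Proof.
rewrite /Fc /= !count_cat !count_map.
congr (_ + _).
  case: k => [|k].
    by rewrite (eq_count (a2 := pred0)) ?count_pred0 // => L /=.
  by apply: eq_count => L /=; rewrite addSn eqSS.
case: j => [|j].
  rewrite !cons_nonU0 //; by case: m.
congr (_ + _).
  by apply: eq_count => L /=; rewrite addnS eqSS.
case: m => [|p] //.
by apply: eq_count => L /=; rewrite addnS eqSS.
Qed.

Definition T n k j := if k + j <= n then 'C(k + j, k) * 'C(j, n - j - k) else 0.

Lemma T_in n k j r : n = k + j + r -> T n k j = 'C(k + j, k) * 'C(j, r).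
Proof.
move=> ->; rewrite /T leq_addr.
by have -> : k + j + r - j - k = r by lia.
Qed.

Lemma T_out n k j : n < k + j -> T n k j = 0.
Proof. by rewrite /T ltnNge => /negbTE ->. Qed.

Lemma T_rec m k j : T m.+1 k j =
  (if k is k'.+1 then T m k' j else 0) +
  (if j is j'.+1 then T m k j' + (if m is p.+1 then T p k j' else 0) else 0).
Proof.
case: k => [|k]; case: j => [|j].
- by rewrite (@T_in _ _ _ m.+1) ?bin0n.
- case: (leqP j m) => Hjm; last first.
    rewrite !T_out //; try lia; by case: m Hjm => // p Hp; rewrite T_out //; lia.
  have [r Hr] : exists r, m = j + r by exists (m - j); lia.
  clear Hjm; subst m; rewrite (@T_in _ _ _ r) ?add0n // (@T_in _ _ _ r) ?add0n //.
  case: r => [|r].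
    rewrite addn0 !bin0 !muln1 ?bin0.
    case: j => [|j] //=; rewrite T_out //; lia.
  rewrite addnS (@T_in _ _ _ r) ?add0n // !bin0 !mul1n binS; lia.
- case: (leqP k m) => Hkm; last by rewrite !T_out //; lia.
  rewrite (@T_in _ _ _ (m - k)); last lia.
  rewrite (@T_in _ _ _ (m - k)); last lia.
  by rewrite !addn0 !binn.
- case: (leqP (k + j).+1 m) => Hm; last first.
    rewrite !T_out //; try lia; by case: m Hm => // p Hp; rewrite T_out //; lia.
  have [r Hr] : exists r, m = (k + j).+1 + r by exists (m - (k + j).+1); lia.
  clear Hm; subst m.
  rewrite (@T_in _ _ _ r); last lia.
  rewrite (@T_in _ _ _ r); last lia.
  rewrite (@T_in _ _ _ r); last lia.
  have E1 : k.+1 + j.+1 = (k + j.+1).+1 by lia.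
  have E2 : k.+1 + j = k + j.+1 by lia.
  rewrite E1 E2 binS.
  rewrite addSn /=.
  case: r => [|r].
    rewrite T_out; last lia.
    rewrite !bin0; lia.
  rewrite (@T_in _ _ _ r); last lia.
  rewrite E2 binS; nia.
Qed.

Lemma Fc_T n : forall k j, Fc n k j = T n k j.
Proof.
suff : forall k j, Fc n k j = T n k j /\ Fc n.+1 k j = T n.+1 k j.
  by move=> H k j; case: (H k j).
elim: n => [|m IH] k j.
  have B : forall k j, Fc 0 k j = T 0 k j.
    by move=> k' j'; rewrite Fc0 /T; case: k' => [|k'] ; case: j' => [|j'].
  split; first exact: B.
  by rewrite Fc_rec T_rec; case: k => [|k]; case: j => [|j] /=; rewrite ?B.
split; first by case: (IH k j).
rewrite Fc_rec T_rec.
have E1 : forall k j, Fc m.+1 k j = T m.+1 k j by move=> k1 j1; case: (IH k1 j1).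
have E0 : forall k j, Fc m k j = T m k j by move=> k1 j1; case: (IH k1 j1).
by case: k => [|k]; case: j => [|j] /=; rewrite ?E1 ?E0.
Qed.

Lemma count_split (X : eqType) (a : pred X) (b : nat -> pred X) N (l : seq X) :
  {in l, forall x, (a x : nat) = \sum_(j < N) (b j x : nat)} ->
  count a l = \sum_(j < N) count (b j) l.
Proof.
elim: l => [|x l IH] H /=; first by rewrite big1.
rewrite big_split /= -IH; last by move=> y Hy; apply: H; rewrite inE Hy orbT.
by rewrite H ?inE ?eqxx.
Qed.

Lemma count_Fc n k :
  count (fun L => count (pred1 U) L == k) (lefts n) = \sum_(j < n.+1) Fc n k j.
Proof.
apply: (@count_split _ _ (fun j L => (count (pred1 U) L == k) && (size L == k + j)) n.+1 (lefts n)) => L; rewrite lefts_mem => /eqP Hw.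
have Hs : size L <= n by rewrite -Hw; exact: size_le_width.
have Hc : count (pred1 U) L <= size L by exact: count_size.
case: eqP => Hk /=.
  have Hj : size L - k < n.+1 by lia.
  rewrite (bigD1 (Ordinal Hj)) //= big1 /=.
    by rewrite addn0 (_ : k + (size L - k) = size L) ?eqxx //; lia.
  move=> i Hi; apply/eqP; rewrite eqb0; apply/negP => /eqP E.
  by move: Hi; rewrite -val_eqE /= E (_ : k + i - k = i) ?eqxx //; lia.
by rewrite big1.
Qed.

Lemma snk_T n k : snk n k = \sum_(j < n.+1) T n k j.
Proof.
rewrite /snk -(big_mkord xpredT (fun j => T n k j)).
case: leqP => Hk.
  rewrite [RHS](@big_cat_nat _ _ _ (n - k).+1) //=; last by rewrite ltnS leq_subr.
  have -> : \sum_((n - k).+1 <= i < n.+1) T n k i = 0.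
    rewrite big_nat_cond big1 // => i /andP [/andP [H1 H2] _]; rewrite T_out //; lia.
  rewrite addn0.
  apply: eq_big_nat => i /andP [_ Hi]; rewrite /T ifT //; lia.
by rewrite big_nat_cond big1 // => i /andP [/andP [_ Hi] _]; rewrite T_out //; lia.
Qed.

Theorem theorem4p6 (n k : nat) : snk n k = num_fssp n k.
Proof. by rewrite main_count count_Fc snk_T; apply: eq_bigr => j _; rewrite Fc_T. Qed.
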